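(* Let $m,n\in\mathbb{N}$ and $(X,y,v)\in\mathbb{C}^{(mn\times mn)\cdot d}\times\mathbb{C}^{mn}\times\mathbb{C}^{mn}$. If $\|X\|_{\mathrm{col}}<\frac{1}{\sqrt n}$, then the linear functional $\ell_{X,y,v}$ defined on the orthonormal basis of $\mathscr{F}_n(\mathbb{C}^d)$ by $E_{\alpha,\beta}\star e_\omega\mapsto y^*\,E_{\alpha,\beta}\star e_\omega(X)\,v$ extends to a bounded linear functional on $\mathscr{F}_n(\mathbb{C}^d)$.
   Context: Equip $\mathbb{C}^{n\times n}$ with the Hilbert–Schmidt inner product and let $\mathscr{F}_n(\mathbb{C}^d)=\bigoplus_{\ell\ge0}\mathbb{C}^{n\times n}\otimes(\mathbb{C}^d\otimes\mathbb{C}^{n\times n})^{\otimes\ell}$ (Hilbert space tensor products). With $E_{i,j}$ the matrix units of $\mathbb{C}^{n\times n}$ and $e_1,\dots,e_d$ the standard basis of $\mathbb{C}^d$, for words $\alpha=a_0\cdots a_\ell,\beta=b_0\cdots b_\ell$ in letters $\{1,\dots,n\}$ and $\omega=w_1\cdots w_\ell$ in letters $\{1,\dots,d\}$ put $E_{\alpha,\beta}\star e_\omega=E_{a_0,b_0}\otimes e_{w_1}\otimes E_{a_1,b_1}\otimes\cdots\otimes e_{w_\ell}\otimes E_{a_\ell,b_\ell}$; these vectors ($\ell\ge0$) form an orthonormal basis of $\mathscr{F}_n(\mathbb{C}^d)$. For $X\in\mathbb{C}^{(mn\times mn)\cdot d}$ (column $d$-tuple of $mn\times mn$ matrices, $\|X\|_{\mathrm{col}}$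 the operator norm of the stacked $mnd\times mn$ matrix), the formal evaluation is $E_{\alpha,\beta}\star e_\omega(X)=(I_m\otimes E_{a_0,b_0})X_{w_1}(I_m\otimes E_{a_1,b_1})X_{w_2}\cdots X_{w_\ell}(I_m\otimes E_{a_\ell,b_\ell})\in\mathbb{C}^{mn\times mn}$. *)

(* Defs.v *)
(* complex numbers C := R[i] over an arbitrary realType R
   (for R the real numbers this is exactly the field of complex numbers). *)
From HB Require Import structures.
From mathcomp Require Import all_boot all_order all_algebra.
From mathcomp Require Import reals.
From mathcomp Require Import complex mxtens.
Set Implicit Arguments. Unset Strict Implicit. Unset Printing Implicit Defensive.
Import Order.TTheory GRing.Theory Num.Theory.
Local Open Scope ring_scope.

Section FockDefs.
Variable R : realType.
Local Notation C := R[i].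

Definition vnorm k (u : 'cV[C]_k) : C := sqrtC (\sum_i `|u i 0| ^+ 2).

(* ||X||_col < t, for X a column d-tuple of (mn x mn) matrices:
   the operator norm of the stacked (mnd x mn) matrix, i.e. the infimum of all
   s >= 0 with ||X u|| <= s ||u|| for all u, where
   ||X u||^2 = \sum_w ||X_w u||^2, is strictly less than t. *)
Definition colnorm_lt m n d (X : 'I_d -> 'M[C]_(m * n)) (t : C) : Prop :=
  exists s : C, [/\ 0 <= s, s < t &
    forall u : 'cV[C]_(m * n),
      sqrtC (\sum_(w < d) vnorm (X w *m u) ^+ 2) <= s * vnorm u].

Definition IE m n (a b : 'I_n) : 'M[C]_(m * n) :=
  (1%:M : 'M[C]_m) *t (delta_mx a b : 'M[C]_n).

(* Index set of the orthonormal basis of F_n(C^d): the basis vector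
   E_{a0,b0} (x) e_{w1} (x) E_{a1,b1} (x) ... (x) e_{wl} (x) E_{al,bl}
   is encoded as ((a0, b0), [:: (w1, a1, b1); ...; (wl, al, bl)]),
   l >= 0 arbitrary.  This is a bijective encoding of the triples
   (alpha, beta, omega) with |alpha| = |beta| = |omega| + 1. *)
Definition FockIdx n d := (('I_n * 'I_n) * seq ('I_d * 'I_n * 'I_n))%type.

Fixpoint tail_eval m n d (X : 'I_d -> 'M[C]_(m * n))
    (s : seq ('I_d * 'I_n * 'I_n)) : 'M[C]_(m * n) :=
  match s with
  | [::] => 1%:M
  | (w, a, b) :: s' => X w *m IE m a b *m tail_eval X s'
  end.

(* Formal evaluation E_{alpha,beta} * e_omega (X)
   = (I (x) E_{a0,b0}) X_{w1} (I (x) E_{a1,b1}) ... X_{wl} (I (x) E_{al,bl}). *)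
Definition basis_eval m n d (X : 'I_d -> 'M[C]_(m * n)) (i : FockIdx n d)
    : 'M[C]_(m * n) :=
  IE m i.1.1 i.1.2 *m tail_eval X i.2.

Definition ell m n d (X : 'I_d -> 'M[C]_(m * n)) (y v : 'cV[C]_(m * n))
    (i : FockIdx n d) : C :=
  ((map_mx Num.conj y)^T *m basis_eval X i *m v) 0 0.

(* A functional given by its values c on an orthonormal basis (indexed by I)
   extends to a bounded linear functional on the Hilbert space iff its linear
   extension to the (dense) linear span of the basis is bounded: for every
   finite family of distinct basis vectors b_i and coefficients f_i,
   |l(\sum f_i b_i)| = |\sum f_i c_i| <= K ||\sum f_i b_i|| = K sqrt(\sum |f_i|^2). *)
Definition extends_bounded (I : eqType) (c : I -> C) : Prop :=
  exists K : C, 0 <= K /\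
    forall (S : seq I) (f : I -> C), uniq S ->
      `| \sum_(i <- S) f i * c i | <= K * sqrtC (\sum_(i <- S) `|f i| ^+ 2).

End FockDefs.

(* Main.v *)
Require Import Defs.
From HB Require Import structures.
From mathcomp Require Import all_boot all_order all_algebra.
From mathcomp Require Import reals.
From mathcomp Require Import complex mxtens.
From mathcomp Require Import ring.
Import Order.TTheory GRing.Theory Num.Theory.
Local Open Scope ring_scope.

Section Gen.
Variable C : numClosedFieldType.

Lemma CS2 (I : Type) (S : seq I) (a b : I -> C) :
  (forall i, a i \is Num.real) -> (forall i, b i \is Num.real) ->
  (\sum_(i <- S) a i * b i) ^+ 2 <= (\sum_(i <- S) a i ^+ 2) * (\sum_(i <- S) b i ^+ 2).
Proof.
move=> ra rb; rewrite -subr_ge0.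
set P := \sum_(i <- S) a i ^+ 2; set Q := \sum_(i <- S) b i ^+ 2.
set A := \sum_(i <- S) a i * b i.
have h1 : P * Q = \sum_(i <- S) \sum_(j <- S) a i ^+ 2 * b j ^+ 2.
  by rewrite /P /Q big_distrl; apply: eq_bigr => i _; rewrite big_distrr.
have h2 : P * Q = \sum_(i <- S) \sum_(j <- S) a j ^+ 2 * b i ^+ 2.
  by rewrite h1 exchange_big.
have h3 : A ^+ 2 = \sum_(i <- S) \sum_(j <- S) (a i * b i) * (a j * b j).
  by rewrite expr2 /A big_distrl; apply: eq_bigr => i _; rewrite big_distrr.
have E : (P * Q - A ^+ 2) *+ 2 =
   \sum_(i <- S) \sum_(j <- S) (a i * b j - a j * b i) ^+ 2.
  rewrite mulrnBl mulr2n {1}h1 h2 h3 -big_split /= -sumrMnl -sumrB.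
  apply: eq_bigr => i _; rewrite -big_split /= -sumrMnl -sumrB.
  by apply: eq_bigr => j _; rewrite !mulr2n; ring.
have : 0 <= (P * Q - A ^+ 2) *+ 2.
  rewrite E; apply: sumr_ge0 => i _; apply: sumr_ge0 => j _.
  by apply: real_exprn_even_ge0 => //; rewrite realB // realM.
by rewrite pmulrn_lge0.
Qed.

Lemma CSC (I : Type) (S : seq I) (f g : I -> C) :
  `|\sum_(i <- S) f i * g i| <=
    sqrtC (\sum_(i <- S) `|f i| ^+ 2) * sqrtC (\sum_(i <- S) `|g i| ^+ 2).
Proof.
apply: le_trans (ler_norm_sum _ _ _) _.
under eq_bigr do rewrite normrM.
have A0 : 0 <= \sum_(i <- S) `|f i| * `|g i|.
  by apply: sumr_ge0 => i _; rewrite mulr_ge0.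
have P0 : 0 <= \sum_(i <- S) `|f i| ^+ 2 by apply: sumr_ge0 => i _; rewrite exprn_ge0.
have Q0 : 0 <= \sum_(i <- S) `|g i| ^+ 2 by apply: sumr_ge0 => i _; rewrite exprn_ge0.
rewrite -(sqrCK A0) -sqrtCM ?nnegrE //.
rewrite ler_sqrtC ?nnegrE ?exprn_ge0 ?mulr_ge0 //.
by apply: CS2 => i; apply: normr_real.
Qed.

End Gen.

Definition nrm2 {C : numDomainType} {k} (u : 'cV[C]_k) := \sum_i `|u i 0| ^+ 2.

Lemma nrm2_ge0 (C : numDomainType) k (u : 'cV[C]_k) : 0 <= nrm2 u.
Proof. by apply: sumr_ge0 => i _; rewrite exprn_ge0. Qed.

Lemma sum_tens (C : nmodType) m n (F : 'I_(m * n) -> C) :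
  \sum_k F k = \sum_(p < m) \sum_(q < n) F (mxtens_index (p, q)).
Proof.
rewrite pair_big /= (reindex (@mxtens_index m n) _) //=.
  by apply: eq_bigr => -[]. 
by exists (@mxtens_unindex m n) => x _; rewrite (mxtens_indexK, mxtens_unindexK).
Qed.


Section R.
Variable R : realType.
Local Notation C := R[i].

Lemma IE_entry m n (a b : 'I_n) (u : 'cV[C]_(m * n)) p q :
  (IE R m a b *m u) (mxtens_index (p, q)) 0 = (q == a)%:R * u (mxtens_index (p, b)) 0.
Proof.
rewrite mxE sum_tens (bigD1 p) //= [X in _ + X]big1 ?addr0 => [|p' Hp'].
  rewrite (bigD1 b) //= [X in _ + X]big1 ?addr0 => [|q' Hq'].
    by rewrite /IE !mxE !mxtens_indexK /= !eqxx andbT mul1r.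
  by rewrite /IE !mxE !mxtens_indexK /= eqxx (negbTE Hq') andbF mulr0 mul0r.
apply: big1 => q' _.
by rewrite /IE !mxE !mxtens_indexK /= eq_sym (negbTE Hp') mul0r mul0r.
Qed.

Lemma IE_sum m n (u : 'cV[C]_(m * n)) :
  \sum_(a < n) \sum_(b < n) nrm2 (IE R m a b *m u) = n%:R * nrm2 u.
Proof.
have E : forall a b, nrm2 (IE R m a b *m u) = \sum_(p < m) `|u (mxtens_index (p, b)) 0| ^+ 2.
  move=> a b; rewrite /nrm2 sum_tens; apply: eq_bigr => p _.
  rewrite (bigD1 a) //= big1 ?addr0 => [|q Hq]; first by rewrite IE_entry eqxx mul1r.
  by rewrite IE_entry (negbTE Hq) mul0r normr0 expr0n.
under eq_bigr do under eq_bigr do rewrite E.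
rewrite sumr_const card_ord /nrm2 sum_tens exchange_big -mulr_natl mulr1 mulr_natl.
by rewrite exchange_big.
Qed.

Fixpoint tails n d k : seq (seq ('I_d * 'I_n * 'I_n)) :=
  if k is k'.+1 then [seq x :: t | x <- index_enum ('I_d * 'I_n * 'I_n)%type, t <- tails n d k']
  else [:: [::]].

Section Lev.
Variables (m n d : nat) (X : 'I_d -> 'M[C]_(m * n)) (s : C).
Hypothesis s0 : 0 <= s.
Hypothesis H : forall u : 'cV[C]_(m * n), \sum_(w < d) nrm2 (X w *m u) <= s ^+ 2 * nrm2 u.

Lemma step_bound (u : 'cV[C]_(m * n)) :
  \sum_(x : 'I_d * 'I_n * 'I_n) nrm2 (X x.1.1 *m IE R m x.1.2 x.2 *m u) <= n%:R * s ^+ 2 * nrm2 u.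
Proof.
rewrite -(pair_bigA _ (fun wa b => nrm2 (X wa.1 *m IE R m wa.2 b *m u))) /=.
rewrite -(pair_bigA _ (fun w a => \sum_b nrm2 (X w *m IE R m a b *m u))) /=.
rewrite exchange_big /=.
under eq_bigr do rewrite exchange_big /=.
apply: le_trans (_ : \sum_(a < n) \sum_(b < n) s ^+ 2 * nrm2 (IE R m a b *m u) <= _).
  apply: ler_sum => a _; apply: ler_sum => b _.
  under eq_bigr do rewrite -mulmxA.
  exact: H.
under eq_bigr do rewrite -mulr_sumr.
by rewrite -mulr_sumr IE_sum mulrA [s ^+ 2 * _]mulrC.
Qed.

Lemma level_bound (v : 'cV[C]_(m * n)) k :
  \sum_(t <- tails n d k) nrm2 (tail_eval X t *m v) <= (n%:R * s ^+ 2) ^+ k * nrm2 v.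
Proof.
elim: k => [|k IH] /=.
  by rewrite big_seq1 /= mul1mx expr0 mul1r.
rewrite big_allpairs_dep exchange_big /=.
apply: le_trans (_ : \sum_(t <- tails n d k) n%:R * s ^+ 2 * nrm2 (tail_eval X t *m v) <= _).
  apply: ler_sum => t _.
  have -> : \sum_(x <- index_enum ('I_d * 'I_n * 'I_n)%type) nrm2 (tail_eval X (x :: t) *m v)
    = \sum_(x : 'I_d * 'I_n * 'I_n) nrm2 (X x.1.1 *m IE R m x.1.2 x.2 *m (tail_eval X t *m v)).
    by apply: eq_bigr => -[[w a] b] _ /=; rewrite !mulmxA.
  exact: step_bound.
rewrite -mulr_sumr (exprS (_ * _)) -[X in _ <= X]mulrA; apply: ler_wpM2l => //.
by rewrite mulr_ge0 ?ler0n ?exprn_ge0.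
Qed.
End Lev.

Lemma head_bound m n d (X : 'I_d -> 'M[C]_(m * n)) (y v : 'cV[C]_(m * n)) t :
  \sum_(p : 'I_n * 'I_n) `|ell X y v (p, t)| ^+ 2 <=
    nrm2 y * (n%:R * nrm2 (tail_eval X t *m v)).
Proof.
set w := tail_eval X t *m v.
have E : forall p : 'I_n * 'I_n, ell X y v (p, t) =
    \sum_i Num.conj (y i 0) * (IE R m p.1 p.2 *m w) i 0.
  by move=> p; rewrite /ell /basis_eval /= -!mulmxA mxE; apply: eq_bigr => i _; rewrite !mxE.
have B : forall p : 'I_n * 'I_n, `|ell X y v (p, t)| ^+ 2 <= nrm2 y * nrm2 (IE R m p.1 p.2 *m w).
  move=> p; rewrite E.
  have := @CSC C _ (index_enum 'I_(m * n)) (fun i => Num.conj (y i 0)) (fun i => (IE R m p.1 p.2 *m w) i 0).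
  move=> /(lerXn2r 2); rewrite !nnegrE normr_ge0 mulr_ge0 ?sqrtC_ge0 ?sumr_ge0 // => [|i _|i _]; last 2 first.
  - by rewrite exprn_ge0.
  - by rewrite exprn_ge0.
  move=> /(_ isT isT); rewrite exprMn !sqrtCK.
  by move=> h; apply: le_trans h _; under eq_bigr do rewrite norm_conjC.
apply: le_trans (ler_sum _ (fun p _ => B p)) _.
rewrite -mulr_sumr ler_wpM2l ?nrm2_ge0 //.
rewrite -(pair_bigA _ (fun a b => nrm2 (IE R m a b *m w))) /=.
by rewrite IE_sum.
Qed.

Lemma geom_bound (r : C) L : 0 <= r -> r < 1 ->
  \sum_(k < L) r ^+ k <= (1 - r)^-1.
Proof.
move=> r0 r1.
have h : (1 - r) * \sum_(k < L) r ^+ k = 1 - r ^+ L.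
  by rewrite -opprB mulNr -subrX1 opprB.
have pos : 0 < 1 - r by rewrite subr_gt0.
rewrite -[X in X <= _](mulKf (lt0r_neq0 pos)) h -[X in _ <= X]mulr1.
apply: ler_wpM2l; [by rewrite invr_ge0 ltW | by rewrite gerBl exprn_ge0].
Qed.

Lemma tails_mem n d (t : seq ('I_d * 'I_n * 'I_n)) : t \in tails n d (size t).
Proof.
elim: t => [|x t IH] /=; first by rewrite inE.
by apply: (allpairs_f (fun x t => x :: t)) => //; rewrite mem_index_enum.
Qed.
End R.

Lemma sum_sub_uniq (C : numDomainType) (I : eqType) (S T : seq I) (g : I -> C) :
  uniq S -> uniq T -> {subset S <= T} -> (forall i, 0 <= g i) ->
  \sum_(i <- S) g i <= \sum_(i <- T) g i.
Proof.
move=> uS uT sST g0; elim: S T uS uT sST => [|x S IH] T /=.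
  by move=> _ _ _; rewrite big_nil sumr_ge0.
move=> /andP[xS uS] uT sST.
have xT : x \in T by apply: sST; rewrite inE eqxx.
rewrite big_cons (big_rem x xT) /= lerD2l.
apply: IH => //; first exact: rem_uniq.
move=> y yS; rewrite (mem_rem_uniq _ uT) inE sST ?inE ?yS ?orbT // andbT.
by apply: contraNneq xS => <-.
Qed.

Lemma sum_undup (C : numDomainType) (I : eqType) (T : seq I) (g : I -> C) :
  (forall i, 0 <= g i) -> \sum_(i <- undup T) g i <= \sum_(i <- T) g i.
Proof.
move=> g0; elim: T => [|x T IH] /=; first by rewrite !big_nil.
case: ifP => _; rewrite big_cons.
  by apply: le_trans IH _; rewrite lerDr.
by rewrite big_cons lerD2l.
Qed.

Lemma sum_sub (C : numDomainType) (I : eqType) (S T : seq I) (g : I -> C) :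
  uniq S -> {subset S <= T} -> (forall i, 0 <= g i) ->
  \sum_(i <- S) g i <= \sum_(i <- T) g i.
Proof.
move=> uS sST g0; apply: le_trans _ (@sum_undup _ _ T g g0).
apply: sum_sub_uniq => //; first exact: undup_uniq.
by move=> i /sST; rewrite mem_undup.
Qed.

Definition allidx n d L : seq (FockIdx n d) :=
  [seq (p, t) | p <- index_enum ('I_n * 'I_n)%type,
                t <- flatten [seq tails n d k | k <- index_iota 0 L.+1]].

Theorem mainTheorem8 (R : realType) (m n d : nat)
  (X : 'I_d -> 'M[R[i]]_(m * n)) (y v : 'cV[R[i]]_(m * n)) :
  colnorm_lt X (sqrtC (n%:R : R[i]))^-1 ->
  extends_bounded (ell X y v : FockIdx n d -> R[i]).
Proof.
move=> [s [s0 slt Hs]].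
have H : forall u : 'cV[R[i]]_(m * n),
    \sum_(w < d) nrm2 (X w *m u) <= s ^+ 2 * nrm2 u.
  move=> u; have := Hs u; rewrite /vnorm.
  under eq_bigr do rewrite sqrtCK.
  have A0 : 0 <= \sum_(w < d) nrm2 (X w *m u) by apply: sumr_ge0 => w _; apply: nrm2_ge0.
  move=> /(lerXn2r 2); rewrite !nnegrE sqrtC_ge0 mulr_ge0 ?sqrtC_ge0 ?nrm2_ge0 //.
  by move=> /(_ A0 isT); rewrite sqrtCK exprMn sqrtCK.
have nz : n != 0%N.
  apply/negP => /eqP n0; rewrite n0 sqrtC0 invr0 in slt.
  by have := lt_le_trans slt s0; rewrite ltxx.
set r := n%:R * s ^+ 2.
have c0 : 0 < sqrtC (n%:R : R[i]) by rewrite sqrtC_gt0 ltr0n lt0n.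
have r0 : 0 <= r by rewrite mulr_ge0 ?ler0n ?exprn_ge0.
have r1 : r < 1.
  have h : s * sqrtC n%:R < 1 by rewrite -ltr_pdivlMr // mul1r.
  have := ltr_pM (mulr_ge0 s0 (ltW c0)) (mulr_ge0 s0 (ltW c0)) h h.
  by rewrite mulr1 mulrACA -!expr2 sqrtCK mulrC.
set B := nrm2 y * n%:R * nrm2 v * (1 - r)^-1.
have B0 : 0 <= B.
  by rewrite /B !mulr_ge0 ?nrm2_ge0 ?ler0n // invr_ge0 subr_ge0 ltW.
have allB : forall L, \sum_(i <- allidx n d L) `|ell X y v i| ^+ 2 <= B.
  move=> L; rewrite /allidx big_allpairs_dep /= exchange_big /=.
  apply: le_trans (_ : \sum_(t <- flatten [seq tails n d k | k <- index_iota 0 L.+1])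
      nrm2 y * (n%:R * nrm2 (tail_eval X t *m v)) <= _).
    by apply: ler_sum => t _; apply: head_bound.
  rewrite big_flatten big_map /=.
  apply: le_trans (_ : \sum_(k <- index_iota 0 L.+1) nrm2 y * n%:R * (r ^+ k * nrm2 v) <= _).
    apply: ler_sum => k _.
    under eq_bigr do rewrite mulrA.
    rewrite -mulr_sumr; apply: ler_wpM2l; first by rewrite mulr_ge0 ?nrm2_ge0 ?ler0n.
    exact: level_bound.
  have -> : \sum_(k <- index_iota 0 L.+1) nrm2 y * n%:R * (r ^+ k * nrm2 v) =
      nrm2 y * n%:R * nrm2 v * \sum_(k < L.+1) r ^+ k.
    by rewrite big_mkord mulr_sumr; apply: eq_bigr => k _; ring.
  apply: ler_wpM2l; first by rewrite !mulr_ge0 ?nrm2_ge0 ?ler0n.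
  exact: geom_bound.
exists (sqrtC B); split; first by rewrite sqrtC_ge0.
move=> S f uS.
set L := \max_(i <- S) size i.2.
have sub : {subset S <= allidx n d L}.
  move=> [p t] iS; rewrite /allidx.
  apply: (allpairs_f (fun p t => (p, t))); first by rewrite mem_index_enum.
  apply/flatten_mapP; exists (size t); last exact: tails_mem.
  rewrite mem_index_iota /= ltnS.
  exact: (@leq_bigmax_seq _ S xpredT (fun i : FockIdx n d => size i.2) (p, t) iS).
have SB : \sum_(i <- S) `|ell X y v i| ^+ 2 <= B.
  apply: le_trans (allB L).
  by apply: sum_sub => // i; rewrite exprn_ge0.
apply: (le_trans (@CSC _ _ S f (ell X y v))).
rewrite mulrC; apply: ler_wpM2r; first by rewrite sqrtC_ge0 sumr_ge0 // => i _; rewrite exprn_ge0.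
by rewrite ler_sqrtC ?nnegrE // sumr_ge0 // => i _; rewrite exprn_ge0.
Qed.
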